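(* For any compilation chain for partial programs and any trace relation ${\sim}\subseteq\mathit{Trace}_S\times\mathit{Trace}_T$ with existential and universal images $\tilde\tau,\tilde\sigma$, the following are equivalent: (i) $\mathit{RTP}^{\tilde\tau}$: for every source partial program $P$ and every $\pi_S\subseteq\mathit{Trace}_S$, $P\models_R\pi_S$ implies $P{\downarrow}\models_R\tilde\tau(\pi_S)$; (ii) $\mathit{RTC}^{\sim}$: for every $P$, every target context $C_T$ and every $t$, if $C_T[P{\downarrow}]\rightsquigarrow t$ then there exist a source context $C_S$ and $s\sim t$ with $C_S[P]\rightsquigarrow s$; (iii) $\mathit{RTP}^{\tilde\sigma}$: for every $P$ and every $\pi_T\subseteq\mathit{Trace}_T$, $P\models_R\tilde\sigma(\pi_T)$ implies $P{\downarrow}\models_R\pi_T$.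
   Context: A compilation chain for partial programs consists of source partial programs $P$ and source contexts $C_S$, target partial programs and target contexts $C_T$, linking operations $C[P]$ producing whole programs at each level, sets $\mathit{Trace}_S,\mathit{Trace}_T$ of traces, semantics relations $W\rightsquigarrow t$ (whole program $W$ can produce $t$), and a compiler mapping $P$ to a target partial program $P{\downarrow}$. $P\models_R\pi$ ($P$ robustly satisfies the trace property $\pi$) iff for every context $C$ at the same level and every trace $t$, $C[P]\rightsquigarrow t$ implies $t\in\pi$. The existential image of $\sim$ is $\tilde\tau(\pi)=\{t\mid\exists s.\ s\sim t\wedge s\in\pi\}$ and its universal image is $\tilde\sigma(\pi)=\{s\mid\forall t.\ s\sim t\Rightarrow t\in\pi\}$. *)

(* Defs.v *)
Record compilation_chain := {
  ProgS : Type;  CtxS : Type;  WholeS : Type;  TraceS : Type;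
  ProgT : Type;  CtxT : Type;  WholeT : Type;  TraceT : Type;
  plugS : CtxS -> ProgS -> WholeS;
  plugT : CtxT -> ProgT -> WholeT;
  semS : WholeS -> TraceS -> Prop;
  semT : WholeT -> TraceT -> Prop;
  compile : ProgS -> ProgT
}.

Section Chain.
Variable CC : compilation_chain.

Definition rsatS (P : ProgS CC) (pi : TraceS CC -> Prop) : Prop :=
  forall (C : CtxS CC) (t : TraceS CC), semS CC (plugS CC C P) t -> pi t.

Definition rsatT (P : ProgT CC) (pi : TraceT CC -> Prop) : Prop :=
  forall (C : CtxT CC) (t : TraceT CC), semT CC (plugT CC C P) t -> pi t.

Variable rel : TraceS CC -> TraceT CC -> Prop.

Definition tau_img (pi : TraceS CC -> Prop) : TraceT CC -> Prop :=
  fun t => exists s, rel s t /\ pi s.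

Definition sigma_img (pi : TraceT CC -> Prop) : TraceS CC -> Prop :=
  fun s => forall t, rel s t -> pi t.

Definition RTP_tau : Prop :=
  forall (P : ProgS CC) (piS : TraceS CC -> Prop),
    rsatS P piS -> rsatT (compile CC P) (tau_img piS).

Definition RTC : Prop :=
  forall (P : ProgS CC) (CT : CtxT CC) (t : TraceT CC),
    semT CC (plugT CC CT (compile CC P)) t ->
    exists (CS : CtxS CC) (s : TraceS CC), rel s t /\ semS CC (plugS CC CS P) s.

Definition RTP_sigma : Prop :=
  forall (P : ProgS CC) (piT : TraceT CC -> Prop),
    rsatS P (sigma_img piT) -> rsatT (compile CC P) piT.

End Chain.

(* Main.v *)
Require Import Defs.

Theorem theorem5p1 (CC : compilation_chain)
  (rel : TraceS CC -> TraceT CC -> Prop) :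
  (RTP_tau CC rel <-> RTC CC rel) /\ (RTC CC rel <-> RTP_sigma CC rel).
Proof.
  unfold RTP_tau, RTC, RTP_sigma, rsatS, rsatT, tau_img, sigma_img.
  split; split.
  - intros H P CT t Ht.
    destruct (H P (fun s => exists CS, semS CC (plugS CC CS P) s)
               (fun C s Hs => ex_intro _ C Hs) CT t Ht) as [s [Hr [CS Hs]]].
    exists CS, s; auto.
  - intros H P piS Hs CT t Ht.
    destruct (H P CT t Ht) as [CS [s [Hr Hs']]].
    exists s; split; [exact Hr | exact (Hs CS s Hs')].
  - intros H P piT Hs CT t Ht.
    destruct (H P CT t Ht) as [CS [s [Hr Hs']]].
    exact (Hs CS s Hs' t Hr).
  - intros H P CT t Ht.
    apply (H P (fun t => exists CS s, rel s t /\ semS CC (plugS CC CS P) s)) with CT; [|exact Ht].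
    intros C s Hs t' Hr. exists C, s; auto.
Qed.
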